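(* Let $H$ be a cocommutative Hopf algebra and $\mathcal{A}$ an $H$-bimodule algebra. Then the L-R-smash product $\mathcal{A}\natural H$ is isomorphic as an algebra to the smash product $\mathcal{A}\# H$, where $\mathcal{A}$ is regarded as a left $H$-module algebra via $h\rightarrow\varphi=h_1\cdot\varphi\cdot S(h_2)$.
   Context: Work over a field $k$, $H$ an ordinary Hopf algebra with antipode $S$, $\Delta(h)=h_1\otimes h_2$. An $H$-bimodule algebra is an associative unital algebra $\mathcal{A}$ which is an $H$-bimodule (actions $h\cdot\varphi$, $\varphi\cdot h$) with $h\cdot(\varphi\psi)=(h_1\cdot\varphi)(h_2\cdot\psi)$, $(\varphi\psi)\cdot h=(\varphi\cdot h_1)(\psi\cdot h_2)$, $h\cdot1=1\cdot h=\varepsilon(h)1$. The L-R-smash product $\mathcal{A}\natural H$ is $\mathcal{A}\otimes H$ with product $(\varphi\natural h)(\psi\natural h')=(\varphi\cdot h'_2)(h_1\cdot\psi)\natural h_2h'_1$ and unit $1\natural1$. For a left $H$-module algebra $\mathcal{A}$ with action $\rightarrow$, the smash product $\mathcal{A}\# H$ is $\mathcal{A}\otimes H$ with product $(\varphi\# h)(\varphi'\# h')=\varphi(h_1\rightarrow\varphi')\# h_2h'$. *)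

(* Defs.v *)
From HB Require Import structures.
From mathcomp Require Import all_boot all_order all_algebra.
Set Implicit Arguments. Unset Strict Implicit. Unset Printing Implicit Defensive.
Import GRing.Theory.
Local Open Scope ring_scope.

(* Tensor products V (x) W of K-vector spaces are represented by finite lists
   of pairs  [:: (v1,w1); ...; (vn,wn)]  standing for  sum_i v_i (x) w_i,
   two lists being identified (teq) iff every bilinear map into every
   K-vector space takes the same value on them; this is exactly equality
   in V (x) W (universal property of the tensor product).
   The coproduct is given in Sweedler form  Delta h = sum_{p in D h} p.1 (x) p.2. *)

Section Defs.
Variable K : fieldType.

Definition bilinear_map (V W U : lmodType K) (f : V -> W -> U) : Prop :=
  (forall (a : K) x x' y, f (a *: x + x') y = a *: f x y + f x' y) /\
  (forall (a : K) x y y', f x (a *: y + y') = a *: f x y + f x y').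

Definition trilinear_map (V1 V2 V3 U : lmodType K) (f : V1 -> V2 -> V3 -> U) : Prop :=
  (forall (a : K) x x' y z, f (a *: x + x') y z = a *: f x y z + f x' y z) /\
  (forall (a : K) x y y' z, f x (a *: y + y') z = a *: f x y z + f x y' z) /\
  (forall (a : K) x y z z', f x y (a *: z + z') = a *: f x y z + f x y z').

Definition tsum (V W : Type) (U : lmodType K) (f : V -> W -> U) (s : seq (V * W)) : U :=
  \sum_(p <- s) f p.1 p.2.

Definition teq (V W : lmodType K) (s t : seq (V * W)) : Prop :=
  forall (U : lmodType K) (f : V -> W -> U), bilinear_map f -> tsum f s = tsum f t.

Definition tscale (V W : lmodType K) (a : K) (s : seq (V * W)) : seq (V * W) :=
  [seq (a *: p.1, p.2) | p <- s].

Record hopf_algebra (H : algType K) (D : H -> seq (H * H)) (eps : H -> K) (S : H -> H)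
  : Prop := {
  hopf_D_linear : forall (a : K) h h', teq (D (a *: h + h')) (tscale a (D h) ++ D h');
  hopf_coassoc : forall (U : lmodType K) (g : H -> H -> H -> U), trilinear_map g ->
    forall h, \sum_(p <- D h) \sum_(q <- D p.1) g q.1 q.2 p.2
            = \sum_(p <- D h) \sum_(q <- D p.2) g p.1 q.1 q.2;
  hopf_eps_linear : forall (a : K) h h', eps (a *: h + h') = a * eps h + eps h';
  hopf_counit_l : forall h, \sum_(p <- D h) eps p.1 *: p.2 = h;
  hopf_counit_r : forall h, \sum_(p <- D h) eps p.2 *: p.1 = h;
  hopf_D_mul : forall g h, teq (D (g * h)) [seq (p.1 * q.1, p.2 * q.2) | p <- D g, q <- D h];
  hopf_D_one : teq (D 1) [:: (1, 1)];
  hopf_eps_mul : forall g h, eps (g * h) = eps g * eps h;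
  hopf_eps_one : eps 1 = 1;
  hopf_S_linear : forall (a : K) h h', S (a *: h + h') = a *: S h + S h';
  hopf_antipode_l : forall h, \sum_(p <- D h) S p.1 * p.2 = eps h *: 1;
  hopf_antipode_r : forall h, \sum_(p <- D h) p.1 * S p.2 = eps h *: 1
}.

Definition cocommutative (H : algType K) (D : H -> seq (H * H)) : Prop :=
  forall h, teq (D h) [seq (p.2, p.1) | p <- D h].

Record bimodule_algebra (H A : algType K) (D : H -> seq (H * H)) (eps : H -> K)
  (la : H -> A -> A) (ra : A -> H -> A) : Prop := {
  bma_la_bilinear : bilinear_map la;
  bma_ra_bilinear : bilinear_map ra;
  bma_la_mul : forall g h x, la (g * h) x = la g (la h x);
  bma_la_one : forall x, la 1 x = x;
  bma_ra_mul : forall x g h, ra x (g * h) = ra (ra x g) h;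
  bma_ra_one : forall x, ra x 1 = x;
  bma_lr : forall g x h, ra (la g x) h = la g (ra x h);
  bma_la_mulA : forall h x y, la h (x * y) = \sum_(p <- D h) la p.1 x * la p.2 y;
  bma_ra_mulA : forall x y h, ra (x * y) h = \sum_(p <- D h) ra x p.1 * ra y p.2;
  bma_la_1 : forall h, la h 1 = eps h *: 1;
  bma_ra_1 : forall h, ra 1 h = eps h *: 1
}.

(* L-R-smash product:
   (phi # h)(psi # h') = (phi . h'_2)(h_1 . psi) # h_2 h'_1, extended bilinearly *)
Definition lr_mul (H A : algType K) (D : H -> seq (H * H))
  (la : H -> A -> A) (ra : A -> H -> A) (s t : seq (A * H)) : seq (A * H) :=
  flatten [seq flatten [seq [seq (ra x.1 q.2 * la p.1 y.1, p.2 * q.1)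
                                | p <- D x.2, q <- D y.2] | y <- t] | x <- s].

Definition smash_act (H A : algType K) (D : H -> seq (H * H)) (S : H -> H)
  (la : H -> A -> A) (ra : A -> H -> A) (h : H) (x : A) : A :=
  \sum_(p <- D h) ra (la p.1 x) (S p.2).

(* smash product: (phi # h)(phi' # h') = phi (h_1 -> phi') # h_2 h' *)
Definition smash_mul (H A : algType K) (D : H -> seq (H * H))
  (act : H -> A -> A) (s t : seq (A * H)) : seq (A * H) :=
  flatten [seq flatten [seq [seq (x.1 * act p.1 y.1, p.2 * y.2) | p <- D x.2]
                         | y <- t] | x <- s].

Definition tensor_alg_iso (H A : algType K)
  (m1 m2 : seq (A * H) -> seq (A * H) -> seq (A * H)) : Prop :=
  exists F : seq (A * H) -> seq (A * H),
    (forall s t, teq s t -> teq (F s) (F t)) /\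
    (forall s t, teq (F (s ++ t)) (F s ++ F t)) /\
    (forall (a : K) s, teq (F (tscale a s)) (tscale a (F s))) /\
    (forall s t, teq (F (m1 s t)) (m2 (F s) (F t))) /\
    teq (F [:: (1, 1)]) [:: (1, 1)] /\
    (forall s t, teq (F s) (F t) -> teq s t) /\
    (forall t, exists s, teq (F s) t).

End Defs.

(* Main.v *)
Require Import Defs.
From mathcomp Require Import all_boot all_order all_algebra.
From mathcomp Require Import zify.
Set Implicit Arguments. Unset Strict Implicit. Unset Printing Implicit Defensive.
Import GRing.Theory.
Local Open Scope ring_scope.

Section Gen.
Variable K : fieldType.

Definition lin (V U : lmodType K) (L : V -> U) := forall (a : K) x y, L (a *: x + y) = a *: L x + L y.

Lemma lin0 (V U : lmodType K) (L : V -> U) : lin L -> L 0 = 0.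
Proof. move=> hL; have := hL 1 0 0; rewrite !scale1r addr0 => h.
by apply: (@addrI _ (L 0)); rewrite addr0 -h. Qed.
Lemma linD (V U : lmodType K) (L : V -> U) : lin L -> forall x y, L (x + y) = L x + L y.
Proof. by move=> hL x y; have := hL 1 x y; rewrite !scale1r. Qed.
Lemma linZ (V U : lmodType K) (L : V -> U) : lin L -> forall a x, L (a *: x) = a *: L x.
Proof. by move=> hL a x; rewrite -(addr0 (a *: x)) hL lin0 // addr0. Qed.
Lemma lin_sum (V U : lmodType K) (L : V -> U) (I : Type) (s : seq I) (F : I -> V) :
  lin L -> L (\sum_(i <- s) F i) = \sum_(i <- s) L (F i).
Proof. move=> hL; elim: s => [|x s IH]; first by rewrite !big_nil lin0.
by rewrite !big_cons linD // IH. Qed.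
Lemma lin_sumf (V U : lmodType K) (I : Type) (s : seq I) (L : I -> V -> U) :
  (forall i, lin (L i)) -> lin (fun x => \sum_(i <- s) L i x).
Proof. move=> hL a x y; rewrite scaler_sumr -big_split; apply: eq_bigr => i _.
exact: hL. Qed.

Lemma bil_l (V W U : lmodType K) (f : V -> W -> U) : bilinear_map f -> forall y, lin (f^~ y).
Proof. by case=> h1 _ y a x x'; apply: h1. Qed.
Lemma bil_r (V W U : lmodType K) (f : V -> W -> U) : bilinear_map f -> forall x, lin (f x).
Proof. by case=> _ h2 x a y y'; apply: h2. Qed.
End Gen.
Section Hopf.
Variable K : fieldType.
Variables (H A : algType K) (D : H -> seq (H * H)) (eps : H -> K) (Sp : H -> H)
  (la : H -> A -> A) (ra : A -> H -> A).
Hypothesis hH : hopf_algebra D eps Sp.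
Hypothesis hC : cocommutative D.
Hypothesis hB : bimodule_algebra D eps la ra.

Lemma bil_of (V W U : lmodType K) (f : V -> W -> U) :
  (forall y, lin (f^~ y)) -> (forall x, lin (f x)) -> bilinear_map f.
Proof. by move=> h1 h2; split=> a x x' y; [apply: (h1 y) | apply: (h2 x)]. Qed.

Lemma tsum_cat (V W : Type) (U : lmodType K) (f : V -> W -> U) s t :
  tsum f (s ++ t) = tsum f s + tsum f t.
Proof. by rewrite /tsum big_cat. Qed.

Lemma Dlin (U : lmodType K) (B : H -> H -> U) : bilinear_map B ->
  lin (fun h => \sum_(p <- D h) B p.1 p.2).
Proof.
move=> hb a h h'; have := hopf_D_linear hH a h h' hb; rewrite /tsum => ->.
rewrite big_cat /= big_map scaler_sumr; congr (_ + _); apply: eq_bigr => p _ /=.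
by rewrite (linZ (bil_l hb p.2)).
Qed.

Lemma Dcocom (U : lmodType K) (B : H -> H -> U) : bilinear_map B -> forall h,
  \sum_(p <- D h) B p.1 p.2 = \sum_(p <- D h) B p.2 p.1.
Proof. by move=> hb h; have := hC h hb; rewrite /tsum big_map. Qed.

Lemma Dmul (U : lmodType K) (B : H -> H -> U) : bilinear_map B -> forall g h,
  \sum_(p <- D (g * h)) B p.1 p.2 = \sum_(p <- D g) \sum_(q <- D h) B (p.1 * q.1) (p.2 * q.2).
Proof.
move=> hb g h; have := hopf_D_mul hH g h hb; rewrite /tsum => ->.
by rewrite big_allpairs_dep.
Qed.

Lemma Done (U : lmodType K) (B : H -> H -> U) : bilinear_map B ->
  \sum_(p <- D 1) B p.1 p.2 = B 1 1.
Proof. by move=> hb; have := hopf_D_one hH hb; rewrite /tsum big_seq1. Qed.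

Lemma lin_sumf_in (V U : lmodType K) (I : eqType) (s : seq I) (L : I -> V -> U) :
  (forall i, i \in s -> lin (L i)) -> lin (fun x => \sum_(i <- s) L i x).
Proof. move=> hL a x y; rewrite scaler_sumr -big_split; apply: eq_big_seq => i hi.
exact: hL. Qed.

Fixpoint Dn (n : nat) (h : H) : seq (seq H) :=
  if n is n'.+1 then flatten [seq [seq p.1 :: l | l <- Dn n' p.2] | p <- D h]
  else [:: [:: h]].

Definition Sw (U : lmodType K) n h (g : seq H -> U) := \sum_(l <- Dn n h) g l.

Lemma Sw0 (U : lmodType K) h (g : seq H -> U) : Sw 0 h g = g [:: h].
Proof. by rewrite /Sw /= big_seq1. Qed.

Lemma SwS (U : lmodType K) n h (g : seq H -> U) :
  Sw n.+1 h g = \sum_(p <- D h) Sw n p.2 (fun l => g (p.1 :: l)).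
Proof. rewrite /Sw /= big_flatten /= big_map; apply: eq_bigr => p _.
by rewrite big_map. Qed.

Lemma Sw1 (U : lmodType K) h (g : seq H -> U) :
  Sw 1 h g = \sum_(p <- D h) g [:: p.1; p.2].
Proof. by rewrite SwS; apply: eq_bigr => p _; rewrite Sw0. Qed.

Lemma size_Dn n h l : l \in Dn n h -> size l = n.+1.
Proof.
elim: n h l => [|n IH] h l /=; first by rewrite inE => /eqP ->.
case/flattenP=> s /mapP [p _ ->] /mapP [l' hl' ->] /=.
by rewrite (IH _ _ hl').
Qed.

Lemma eq_Sw (U : lmodType K) n h (g g' : seq H -> U) :
  (forall l, size l = n.+1 -> g l = g' l) -> Sw n h g = Sw n h g'.
Proof. move=> e; apply: eq_big_seq => l hl; apply: e; exact: size_Dn hl. Qed.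

Definition ML (U : lmodType K) n (g : seq H -> U) :=
  forall pre post, (size pre + size post)%N = n -> lin (fun x => g (pre ++ x :: post)).

Lemma ML_cons (U : lmodType K) n (g : seq H -> U) :
  ML n.+1 g -> forall x, ML n (fun l => g (x :: l)).
Proof. move=> hg x pre post hs; apply: (hg (x :: pre) post); by rewrite /= addSn hs. Qed.

Lemma ML_head (U : lmodType K) n (g : seq H -> U) :
  ML n g -> forall l, size l = n -> lin (fun x => g (x :: l)).
Proof. by move=> hg l hl; apply: (hg [::] l). Qed.

Lemma Sw_lin (U : lmodType K) n (g : seq H -> U) : ML n g -> lin (fun h => Sw n h g).
Proof.
elim: n g => [|n IH] g hg.
  by move=> a x y; rewrite !Sw0; apply: (hg [::] [::]).
move=> a x y; rewrite !SwS.
pose B := fun x y => Sw n y (fun l => g (x :: l)).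
have hb : bilinear_map B.
  apply: bil_of => [y' | x']; last exact: IH (ML_cons hg x').
  rewrite /B /Sw; apply: lin_sumf_in => l hl; apply: (ML_head hg).
  exact: size_Dn hl.
exact: (Dlin hb).
Qed.

Lemma tri_of (U : lmodType K) (T : H -> H -> H -> U) :
  (forall y z, lin (fun x => T x y z)) -> (forall x z, lin (fun y => T x y z)) ->
  (forall x y, lin (T x y)) -> trilinear_map T.
Proof.
move=> h1 h2 h3; split; [|split] => a x.
- by move=> x' y z; apply: (h1 y z).
- by move=> y y' z; apply: (h2 x z).
- by move=> y z z'; apply: (h3 x y).
Qed.

Lemma Sw_expand (U : lmodType K) n i (g : seq H -> U) : (i <= n)%N -> ML n.+1 g ->
  forall h, Sw n h (fun l => \sum_(p <- D (nth 0 l i))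
                       g (take i l ++ p.1 :: p.2 :: drop i.+1 l)) = Sw n.+1 h g.
Proof.
elim: n i g => [|n IH] [|i] g //= hi hg h.
- by rewrite Sw0 Sw1.
- pose T := fun x y z => Sw n z (fun l => g (x :: y :: l)).
  have hT : trilinear_map T.
    apply: tri_of => [y z|x z|x y].
    + rewrite /T /Sw; apply: lin_sumf_in => l hl; apply: (hg [::] (y :: l)).
      by rewrite /= (size_Dn hl).
    + rewrite /T /Sw; apply: lin_sumf_in => l hl; apply: (hg [:: x] l).
      by rewrite /= (size_Dn hl).
    + exact: Sw_lin (ML_cons (ML_cons hg x) y).
  have := hopf_coassoc hH hT h; rewrite /T => e.
  rewrite SwS [RHS]SwS; transitivity (\sum_(p <- D h) \sum_(q <- D p.1) Sw n p.2 (fun l => g (q.1 :: q.2 :: l))).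
    apply: eq_bigr => p _; rewrite /Sw exchange_big; apply: eq_bigr => l _.
    by apply: eq_bigr => q _; rewrite /= drop0.
  apply: (eq_trans e); apply: eq_bigr => p _; by rewrite SwS.
- rewrite SwS [RHS]SwS; apply: eq_bigr => p _ /=.
  exact: IH (ML_cons hg p.1) p.2.
Qed.

Lemma Sw_cat (U : lmodType K) n m (g : seq H -> U) : ML (n + m) g ->
  forall h, Sw n h (fun l => Sw m (nth 0 l n) (fun k => g (take n l ++ k))) = Sw (n + m) h g.
Proof.
elim: n g => [|n IH] g hg h.
  by rewrite Sw0 /= add0n.
rewrite SwS addSn SwS; apply: eq_bigr => p _ /=.
by apply: IH (ML_cons hg p.1) p.2.
Qed.

Lemma Sw_swap (U : lmodType K) n i (g g' : seq H -> U) : (i < n)%N -> ML n g -> ML n g' ->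
  (forall pre x y post, size pre = i -> (size pre + size post).+1 = n ->
     g' (pre ++ x :: y :: post) = g (pre ++ y :: x :: post)) ->
  forall h, Sw n h g = Sw n h g'.
Proof.
case: n => [//|m] hi hg hg' e h.
rewrite -(Sw_expand (i:=i) _ hg) // -(Sw_expand (i:=i) _ hg') //.
apply: eq_Sw => l hl.
have hs1 : size (take i l) = i by rewrite size_take hl hi.
have hs2 : (size (take i l) + size (drop i.+1 l)).+1 = m.+1.
  by rewrite hs1 size_drop hl; lia.
pose B := fun x y => g (take i l ++ x :: y :: drop i.+1 l).
have hb : bilinear_map B.
  apply: bil_of => [y|x].
  - apply: (hg (take i l) (y :: drop i.+1 l)); rewrite /= -hs2; lia.
  - move=> a u v; rewrite /B.
    have := hg (rcons (take i l) x) (drop i.+1 l); rewrite size_rcons => /(_ hs2).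
    by move=> /(_ a u v); rewrite !cat_rcons.
rewrite (Dcocom hb); apply: eq_bigr => p _; rewrite /B e //.
Qed.

Lemma set_nth_cat0 (pre post : seq H) x :
  set_nth 0 (pre ++ 0 :: post) (size pre) x = pre ++ x :: post.
Proof. by elim: pre => [|y pre IH] //=; rewrite IH. Qed.

Lemma ML_of (U : lmodType K) n (g : seq H -> U) :
  (forall l, size l = n.+1 -> forall i, (i < n.+1)%N -> lin (fun x => g (set_nth 0 l i x))) ->
  ML n g.
Proof.
move=> h pre post hs a x y.
have := h (pre ++ 0 :: post) _ (size pre) _ a x y.
rewrite !set_nth_cat0; apply; first by rewrite size_cat /= addnS hs.
by rewrite -hs ltnS leq_addr.
Qed.

Lemma sAl' (B : algType K) (k : K) (x y : B) : (k *: x) * y = k *: (x * y).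
Proof. by rewrite scalerAl. Qed.
Lemma sAr' (B : algType K) (k : K) (x y : B) : x * (k *: y) = k *: (x * y).
Proof. by rewrite scalerAr. Qed.
Lemma sA' (V : lmodType K) (a b : K) (v : V) : (a * b) *: v = a *: (b *: v).
Proof. by rewrite scalerA. Qed.

Lemma raD1 x x' y : ra (x + x') y = ra x y + ra x' y.
Proof. by have h := linD (bil_l (bma_ra_bilinear hB) y); exact: h. Qed.
Lemma raZ1 a x y : ra (a *: x) y = a *: ra x y.
Proof. by have h := linZ (bil_l (bma_ra_bilinear hB) y); exact: h. Qed.
Lemma raD2 x y y' : ra x (y + y') = ra x y + ra x y'.
Proof. by have h := linD (bil_r (bma_ra_bilinear hB) x); exact: h. Qed.
Lemma raZ2 a x y : ra x (a *: y) = a *: ra x y.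
Proof. by have h := linZ (bil_r (bma_ra_bilinear hB) x); exact: h. Qed.
Lemma laD1 x x' y : la (x + x') y = la x y + la x' y.
Proof. by have h := linD (bil_l (bma_la_bilinear hB) y); exact: h. Qed.
Lemma laZ1 a x y : la (a *: x) y = a *: la x y.
Proof. by have h := linZ (bil_l (bma_la_bilinear hB) y); exact: h. Qed.
Lemma laD2 x y y' : la x (y + y') = la x y + la x y'.
Proof. by have h := linD (bil_r (bma_la_bilinear hB) x); exact: h. Qed.
Lemma laZ2 a x y : la x (a *: y) = a *: la x y.
Proof. by have h := linZ (bil_r (bma_la_bilinear hB) x); exact: h. Qed.
Lemma Sp_lin : lin Sp.
Proof. exact: hopf_S_linear hH. Qed.
Lemma SD x y : Sp (x + y) = Sp x + Sp y.
Proof. by have h := linD Sp_lin; exact: h. Qed.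
Lemma SZ a x : Sp (a *: x) = a *: Sp x.
Proof. by have h := linZ Sp_lin; exact: h. Qed.
Lemma epsD x y : eps (x + y) = eps x + eps y.
Proof. by have := hopf_eps_linear hH 1 x y; rewrite scale1r mul1r. Qed.
Lemma epsZ a x : eps (a *: x) = a * eps x.
Proof. by have := hopf_eps_linear hH a x 0; rewrite addr0 => ->;
  have := hopf_eps_linear hH 1 0 0; rewrite scale1r mul1r addr0 => h;
  rewrite -[X in _ + X](addrK (eps 0)) -{1}h subrr addr0. Qed.

Ltac destr l hl := repeat (let x := fresh "x" in case: l hl => [|x l] //= hl).

Section Main.
Variables (U : lmodType K) (f : A -> H -> U).
Hypothesis hf : bilinear_map f.
Lemma fD1 x x' y : f (x + x') y = f x y + f x' y.
Proof. by have h := linD (bil_l hf y); exact: h. Qed.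
Lemma fZ1 a x y : f (a *: x) y = a *: f x y.
Proof. by have h := linZ (bil_l hf y); exact: h. Qed.
Lemma fD2 x y y' : f x (y + y') = f x y + f x y'.
Proof. by have h := linD (bil_r hf x); exact: h. Qed.
Lemma fZ2 a x y : f x (a *: y) = a *: f x y.
Proof. by have h := linZ (bil_r hf x); exact: h. Qed.

Lemma scalerCA' (V : lmodType K) (a b : K) (v : V) : a *: (b *: v) = b *: (a *: v).
Proof. by rewrite !scalerA mulrC. Qed.

Ltac lsimp := rewrite ?(mulrDl, mulrDr, sAl', sAr', raD1, raZ1, raD2, raZ2, laD1, laZ1, laD2, laZ2, SD, SZ, epsD, epsZ, scalerDl, scalerDr, sA', fD1, fZ1, fD2, fZ2).
Ltac linS := rewrite /Sw ?scaler_sumr -?big_split; apply: eq_bigr => ? _ /=.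
Ltac mlsolve := apply: ML_of;
  let l := fresh "l" in let hl := fresh "hl" in let i := fresh "i" in let hi := fresh "hi" in
  intros l hl i hi; destr l hl;
  case: i hi => [|[|[|[|[|?]]]]] //= _ ? ? ?; repeat linS; lsimp; try done.

Definition E (phi psi : A) (l m : seq H) :=
  f (ra phi (l`_2 * m`_0) * ra (la l`_0 psi) (Sp l`_1 * (l`_3 * m`_1))) (l`_4 * m`_2).

Lemma M1 phi psi l : ML 2 (E phi psi l).
Proof. rewrite /E. mlsolve. Qed.

Lemma M4 phi psi h' : ML 4 (fun l => Sw 2 h' (E phi psi l)).
Proof. rewrite /E. mlsolve. Qed.

Lemma bsum1 (V W X : lmodType K) (g : V -> W -> X) (hb : bilinear_map g) (I : Type) (s : seq I) F y :
  g (\sum_(i <- s) F i) y = \sum_(i <- s) g (F i) y.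
Proof. by have h := lin_sum s F (bil_l hb y); exact: h. Qed.
Lemma bsum2 (V W X : lmodType K) (g : V -> W -> X) (hb : bilinear_map g) (I : Type) (s : seq I) F x :
  g x (\sum_(i <- s) F i) = \sum_(i <- s) g x (F i).
Proof. by have h := lin_sum s F (bil_r hb x); exact: h. Qed.

Lemma Sw2_right (V : lmodType K) h (G : seq H -> V) :
  Sw 2 h G = \sum_(d <- D h) \sum_(g <- D d.2) G [:: d.1; g.1; g.2].
Proof. by rewrite SwS; apply: eq_bigr => d _; rewrite Sw1. Qed.
Lemma Sw2_left (V : lmodType K) h (G : seq H -> V) : ML 2 G ->
  Sw 2 h G = \sum_(d <- D h) \sum_(g <- D d.1) G [:: g.1; g.2; d.2].
Proof. by move=> hG; rewrite -(Sw_expand (i:=0)) // Sw1. Qed.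

Definition N phi psi h h' := Sw 2 h (fun l => Sw 2 h' (fun m =>
   f (ra phi (l`_1 * m`_0) * ra (la l`_0 psi) m`_1) (l`_2 * m`_2))).

Lemma LS1 phi psi h h' :
  \sum_(p <- D h) \sum_(r <- D (p.2 * h')) f (ra (phi * smash_act D Sp la ra p.1 psi) r.1) r.2 =
  \sum_(p <- D h) \sum_(q <- D p.1) \sum_(c <- D p.2) \sum_(d <- D h')
     f (ra (phi * ra (la q.1 psi) (Sp q.2)) (c.1 * d.1)) (c.2 * d.2).
Proof.
apply: eq_bigr => p _; rewrite /smash_act.
under eq_bigr => r _ do rewrite mulr_sumr (bsum1 (bma_ra_bilinear hB)) (bsum1 hf).
rewrite exchange_big; apply: eq_bigr => q _ /=.
pose B := fun x y => f (ra (phi * ra (la q.1 psi) (Sp q.2)) x) y.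
have hb : bilinear_map B by apply: bil_of => [y|x] a u v; rewrite /B; lsimp.
exact: (Dmul hb).
Qed.

Lemma LS2 phi psi h h' :
  \sum_(p <- D h) \sum_(q <- D p.1) \sum_(c <- D p.2) \sum_(d <- D h')
     f (ra (phi * ra (la q.1 psi) (Sp q.2)) (c.1 * d.1)) (c.2 * d.2) =
  \sum_(p <- D h) \sum_(q <- D p.1) \sum_(c <- D p.2) \sum_(e <- D c.1)
     \sum_(d <- D h') \sum_(g <- D d.1)
     E phi psi [:: q.1; q.2; e.1; e.2; c.2] [:: g.1; g.2; d.2].
Proof.
apply: eq_bigr => p _; apply: eq_bigr => q _; apply: eq_bigr => c _.
set Y := ra (la q.1 psi) (Sp q.2).
pose B := fun x y => ra phi x * ra Y y.
have hb : bilinear_map B by apply: bil_of => [y|x] a u v; rewrite /B; lsimp.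
under eq_bigr => d _ do rewrite (bma_ra_mulA hB) (Dmul hb) (bsum1 hf).
under eq_bigr => d _ do under eq_bigr => e _ do rewrite (bsum1 hf).
rewrite exchange_big; apply: eq_bigr => e _; apply: eq_bigr => d _; apply: eq_bigr => g _.
by rewrite /E /B /= /Y -(bma_ra_mul hB).
Qed.

Lemma M2 phi psi h' x y : ML 2 (fun k => Sw 2 h' (E phi psi ([:: x; y] ++ k))).
Proof. rewrite /E. mlsolve. Qed.

Lemma M3 phi psi h' : ML 2 (fun l => Sw 2 l`_2 (fun k => Sw 2 h' (E phi psi (take 2 l ++ k)))).
Proof.
apply: ML_of => l hl i hi; destr l hl; case: i hi => [|[|[|?]]] //= _.
- move=> a u v; rewrite /E; repeat linS; lsimp; done.
- move=> a u v; rewrite /E; repeat linS; lsimp; done.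
- exact: Sw_lin (M2 _ _ _ _ _).
Qed.

Lemma LS3 phi psi h h' :
  \sum_(p <- D h) \sum_(q <- D p.1) \sum_(c <- D p.2) \sum_(e <- D c.1)
     \sum_(d <- D h') \sum_(g <- D d.1)
     E phi psi [:: q.1; q.2; e.1; e.2; c.2] [:: g.1; g.2; d.2] =
  Sw 4 h (fun l => Sw 2 h' (E phi psi l)).
Proof.
rewrite -(Sw_cat (n:=2) (m:=2) (M4 phi psi h')) /=.
symmetry; etransitivity; first exact: (Sw2_left h (M3 phi psi h')).
symmetry.
apply: eq_bigr => p _; apply: eq_bigr => q _ /=.
symmetry; etransitivity; first exact: (Sw2_left p.2 (M2 phi psi h' q.1 q.2)).
symmetry; apply: eq_bigr => c _; apply: eq_bigr => e _ /=.
symmetry; exact: (Sw2_left h' (M1 phi psi _)).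
Qed.

Definition E' (phi psi : A) (l m : seq H) :=
  f (ra phi (l`_3 * m`_0) * ra (la l`_0 psi) (Sp l`_1 * (l`_2 * m`_1))) (l`_4 * m`_2).

Lemma M5 phi psi h' : ML 4 (fun l => Sw 2 h' (E' phi psi l)).
Proof. rewrite /E'. mlsolve. Qed.

Lemma LS4 phi psi h h' :
  Sw 4 h (fun l => Sw 2 h' (E phi psi l)) = Sw 4 h (fun l => Sw 2 h' (E' phi psi l)).
Proof.
apply: (Sw_swap (i:=2)) => //; [exact: M4 | exact: M5 |].
by move=> pre x y post hs hs2; case: pre hs hs2 => [|p0 [|p1 [|? ?]]].
Qed.

Definition Q (phi psi : A) h' (l : seq H) := eps l`_1 *: Sw 2 h' (fun m =>
  f (ra phi (l`_2 * m`_0) * ra (la l`_0 psi) m`_1) (l`_3 * m`_2)).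

Lemma LS5pt phi psi h' x0 x1 x2 x3 :
  \sum_(p <- D x1) Sw 2 h' (E' phi psi [:: x0; p.1; p.2; x2; x3]) = Q phi psi h' [:: x0; x1; x2; x3].
Proof.
pose L y := Sw 2 h' (fun m => f (ra phi (x2 * m`_0) * ra (la x0 psi) (y * m`_1)) (x3 * m`_2)).
have hL : lin L by move=> a u v; rewrite /L; repeat linS; lsimp.
transitivity (\sum_(p <- D x1) L (Sp p.1 * p.2)).
  apply: eq_bigr => p _; rewrite /L /E' /Sw; apply: eq_bigr => m _ /=; by rewrite mulrA.
rewrite -(lin_sum _ _ hL) (hopf_antipode_l hH) (linZ hL) /Q /L /Sw; congr (_ *: _).
by apply: eq_bigr => m _ /=; rewrite mul1r.
Qed.

Lemma LS5 phi psi h h' :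
  Sw 4 h (fun l => Sw 2 h' (E' phi psi l)) = Sw 3 h (Q phi psi h').
Proof.
rewrite -(Sw_expand (i:=1) _ (M5 phi psi h')) //.
by apply: eq_Sw => l hl; destr l hl; rewrite LS5pt.
Qed.

Lemma M6 phi psi h' : ML 3 (Q phi psi h').
Proof. rewrite /Q. mlsolve; by rewrite [in LHS]scalerCA'. Qed.

Lemma LS6pt phi psi h' x0 x1 x2 :
  \sum_(p <- D x0) Q phi psi h' [:: p.1; p.2; x1; x2] =
  Sw 2 h' (fun m => f (ra phi (x1 * m`_0) * ra (la x0 psi) m`_1) (x2 * m`_2)).
Proof.
pose W y := Sw 2 h' (fun m => f (ra phi (x1 * m`_0) * ra (la y psi) m`_1) (x2 * m`_2)).
have hW : lin W by move=> a u v; rewrite /W; repeat linS; lsimp.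
transitivity (\sum_(p <- D x0) W (eps p.2 *: p.1)).
  by apply: eq_bigr => p _; rewrite (linZ hW).
by rewrite -(lin_sum _ _ hW) (hopf_counit_r hH).
Qed.

Lemma LS6 phi psi h h' : Sw 3 h (Q phi psi h') = N phi psi h h'.
Proof.
rewrite -(Sw_expand (i:=0) _ (M6 phi psi h')) //.
by apply: eq_Sw => l hl; destr l hl; rewrite LS6pt.
Qed.

Lemma LHS_N phi psi h h' :
  \sum_(p <- D h) \sum_(r <- D (p.2 * h')) f (ra (phi * smash_act D Sp la ra p.1 psi) r.1) r.2 =
  N phi psi h h'.
Proof. by rewrite LS1 LS2 LS3 LS4 LS5 LS6. Qed.

Definition R0 (phi psi : A) (l m : seq H) :=
  f (ra phi (l`_0 * m`_2) * ra (la l`_1 psi) m`_0) (l`_2 * m`_1).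
Definition R1 (phi psi : A) (l m : seq H) :=
  f (ra phi (l`_1 * m`_2) * ra (la l`_0 psi) m`_0) (l`_2 * m`_1).
Definition R2 (phi psi : A) (l m : seq H) :=
  f (ra phi (l`_1 * m`_1) * ra (la l`_0 psi) m`_0) (l`_2 * m`_2).
Definition R3 (phi psi : A) (l m : seq H) :=
  f (ra phi (l`_1 * m`_0) * ra (la l`_0 psi) m`_1) (l`_2 * m`_2).

Lemma MR0 phi psi h' : ML 2 (fun l => Sw 2 h' (R0 phi psi l)).
Proof. rewrite /R0. mlsolve. Qed.
Lemma MR1 phi psi h' : ML 2 (fun l => Sw 2 h' (R1 phi psi l)).
Proof. rewrite /R1. mlsolve. Qed.
Lemma MR1' phi psi l : ML 2 (R1 phi psi l).
Proof. rewrite /R1. mlsolve. Qed.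
Lemma MR2' phi psi l : ML 2 (R2 phi psi l).
Proof. rewrite /R2. mlsolve. Qed.
Lemma MR3' phi psi l : ML 2 (R3 phi psi l).
Proof. rewrite /R3. mlsolve. Qed.

Lemma RHS_N phi psi h h' :
  \sum_(a <- D h) \sum_(b <- D h') \sum_(c <- D a.2) \sum_(d <- D b.2)
    f (ra (ra phi a.1) d.2 * la c.1 (ra psi b.1)) (c.2 * d.1) = N phi psi h h'.
Proof.
transitivity (Sw 2 h (fun l => Sw 2 h' (R0 phi psi l))).
  rewrite Sw2_right; apply: eq_bigr => a _; rewrite exchange_big; apply: eq_bigr => c _.
  rewrite Sw2_right; apply: eq_bigr => b _; apply: eq_bigr => d _.
  by rewrite /R0 /= (bma_ra_mul hB) (bma_lr hB).
rewrite (Sw_swap (i:=0) (g' := fun l => Sw 2 h' (R1 phi psi l))) //; last first.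
- by move=> pre x y post; case: pre.
- exact: MR1.
- exact: MR0.
rewrite /N; apply: eq_Sw => l _.
rewrite (Sw_swap (i:=1) (g' := R2 phi psi l)) //; last first.
- by move=> pre x y post; case: pre => [|? [|? ?]].
- exact: MR2'.
- exact: MR1'.
rewrite (Sw_swap (i:=0) (g' := R3 phi psi l)) //; last first.
- by move=> pre x y post; case: pre.
- exact: MR3'.
- exact: MR2'.
Qed.
End Main.

Definition Gm (s : seq (A * H)) : seq (A * H) :=
  flatten [seq [seq (ra x.1 p.1, p.2) | p <- D x.2] | x <- s].
Definition Fm (s : seq (A * H)) : seq (A * H) :=
  flatten [seq [seq (ra x.1 (Sp p.1), p.2) | p <- D x.2] | x <- s].

Section Main2.
Variables (U : lmodType K) (f : A -> H -> U).
Hypothesis hf : bilinear_map f.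

Ltac lsimp := rewrite ?(mulrDl, mulrDr, sAl', sAr', raD1, raZ1, raD2, raZ2, laD1, laZ1, laD2, laZ2, SD, SZ, epsD, epsZ, scalerDl, scalerDr, sA', fD1 hf, fZ1 hf, fD2 hf, fZ2 hf).
Ltac linS := rewrite /Sw ?scaler_sumr -?big_split; apply: eq_bigr => ? _ /=.
Ltac mlsolve := apply: ML_of;
  let l := fresh "l" in let hl := fresh "hl" in let i := fresh "i" in let hi := fresh "hi" in
  intros l hl i hi; destr l hl;
  case: i hi => [|[|[|[|[|?]]]]] //= _ ? ? ?; repeat linS; lsimp; try done.

Lemma tG s : tsum f (Gm s) = \sum_(x <- s) \sum_(p <- D x.2) f (ra x.1 p.1) p.2.
Proof. by rewrite /tsum /Gm big_flatten big_map; apply: eq_bigr => x _; rewrite big_map. Qed.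
Lemma tF s : tsum f (Fm s) = \sum_(x <- s) \sum_(p <- D x.2) f (ra x.1 (Sp p.1)) p.2.
Proof. by rewrite /tsum /Fm big_flatten big_map; apply: eq_bigr => x _; rewrite big_map. Qed.

Lemma bilG : bilinear_map (fun a h => \sum_(p <- D h) f (ra a p.1) p.2).
Proof.
apply: bil_of => [h|a].
  by move=> c u w; repeat linS; lsimp.
apply: (Dlin (B := fun x y => f (ra a x) y)); apply: bil_of => [y|x] c u w; lsimp; done.
Qed.
Lemma bilF : bilinear_map (fun a h => \sum_(p <- D h) f (ra a (Sp p.1)) p.2).
Proof.
apply: bil_of => [h|a].
  by move=> c u w; repeat linS; lsimp.
apply: (Dlin (B := fun x y => f (ra a (Sp x)) y)); apply: bil_of => [y|x] c u w; lsimp; done.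
Qed.

Lemma GF s : tsum f (Gm (Fm s)) = tsum f s.
Proof.
rewrite tG /Fm big_flatten big_map /tsum; apply: eq_bigr => x _.
rewrite big_map.
transitivity (Sw 2 x.2 (fun l => f (ra x.1 (Sp l`_0 * l`_1)) l`_2)).
  by rewrite Sw2_right; apply: eq_bigr => q _; apply: eq_bigr => p _ /=; rewrite (bma_ra_mul hB).
have hM : ML 2 (fun l => f (ra x.1 (Sp l`_0 * l`_1)) l`_2) by mlsolve.
rewrite -(Sw_expand (i:=0) _ hM) // Sw1 /=.
transitivity (\sum_(q <- D x.2) f (ra x.1 (eps q.1 *: 1)) q.2).
  apply: eq_bigr => q _.
  pose L y := f (ra x.1 y) q.2.
  have hL : lin L by move=> c u w; rewrite /L; lsimp.
  by rewrite -(hopf_antipode_l hH) -/(L _) (lin_sum _ _ hL).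
under eq_bigr => q _ do rewrite raZ2 (bma_ra_one hB) (fZ1 hf) -(fZ2 hf).
by rewrite -(bsum2 hf) (hopf_counit_l hH).
Qed.

Lemma FG s : tsum f (Fm (Gm s)) = tsum f s.
Proof.
rewrite tF /Gm big_flatten big_map /tsum; apply: eq_bigr => x _.
rewrite big_map.
transitivity (Sw 2 x.2 (fun l => f (ra x.1 (l`_0 * Sp l`_1)) l`_2)).
  by rewrite Sw2_right; apply: eq_bigr => q _; apply: eq_bigr => p _ /=; rewrite (bma_ra_mul hB).
have hM : ML 2 (fun l => f (ra x.1 (l`_0 * Sp l`_1)) l`_2) by mlsolve.
rewrite -(Sw_expand (i:=0) _ hM) // Sw1 /=.
transitivity (\sum_(q <- D x.2) f (ra x.1 (eps q.1 *: 1)) q.2).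
  apply: eq_bigr => q _.
  pose L y := f (ra x.1 y) q.2.
  have hL : lin L by move=> c u w; rewrite /L; lsimp.
  by rewrite -(hopf_antipode_r hH) -/(L _) (lin_sum _ _ hL).
under eq_bigr => q _ do rewrite raZ2 (bma_ra_one hB) (fZ1 hf) -(fZ2 hf).
by rewrite -(bsum2 hf) (hopf_counit_l hH).
Qed.

Lemma tlr s t : tsum f (lr_mul D la ra s t) = \sum_(x <- s) \sum_(y <- t)
   \sum_(p <- D x.2) \sum_(q <- D y.2) f (ra x.1 q.2 * la p.1 y.1) (p.2 * q.1).
Proof.
rewrite /tsum /lr_mul big_flatten big_map; apply: eq_bigr => x _.
rewrite big_flatten big_map; apply: eq_bigr => y _.
by rewrite big_allpairs_dep.
Qed.

Lemma tsm act s t : tsum f (smash_mul D act s t) = \sum_(x <- s) \sum_(y <- t)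
   \sum_(p <- D x.2) f (x.1 * act p.1 y.1) (p.2 * y.2).
Proof.
rewrite /tsum /smash_mul big_flatten big_map; apply: eq_bigr => x _.
rewrite big_flatten big_map; apply: eq_bigr => y _.
by rewrite big_map.
Qed.

Lemma lr_resp1 s s' t : teq s s' -> tsum f (lr_mul D la ra s t) = tsum f (lr_mul D la ra s' t).
Proof.
move=> hst; rewrite !tlr.
pose L1 := fun a h => \sum_(y <- t) \sum_(p <- D h) \sum_(q <- D y.2)
   f (ra a q.2 * la p.1 y.1) (p.2 * q.1).
have hL : bilinear_map L1.
  apply: bil_of => [h|a].
    by move=> c u w; rewrite /L1; repeat linS; lsimp.
  rewrite /L1; apply: lin_sumf => y.
  apply: (Dlin (B := fun x z => \sum_(q <- D y.2) f (ra a q.2 * la x y.1) (z * q.1))).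
  by apply: bil_of => [z|x] c u w; repeat linS; lsimp.
exact: (hst _ _ hL).
Qed.

Lemma lr_resp2 s t t' : teq t t' -> tsum f (lr_mul D la ra s t) = tsum f (lr_mul D la ra s t').
Proof.
move=> hst; rewrite !tlr exchange_big [RHS]exchange_big.
pose L2 := fun b k => \sum_(x <- s) \sum_(p <- D x.2) \sum_(q <- D k)
   f (ra x.1 q.2 * la p.1 b) (p.2 * q.1).
have hL : bilinear_map L2.
  apply: bil_of => [k|b].
    by move=> c u w; rewrite /L2; repeat linS; lsimp.
  rewrite /L2; apply: lin_sumf => x; apply: lin_sumf => p.
  apply: (Dlin (B := fun u w => f (ra x.1 w * la p.1 b) (p.2 * u))).
  by apply: bil_of => [z|z] c u w; lsimp.
exact: (hst _ _ hL).
Qed.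

Lemma sum_flat (I J : Type) (phi : I -> seq J) (s : seq I) (F : J -> U) :
  \sum_(z <- flatten [seq phi x | x <- s]) F z = \sum_(x <- s) \sum_(z <- phi x) F z.
Proof. by rewrite big_flatten big_map. Qed.
Lemma sum_map (I J : Type) (phi : I -> J) (s : seq I) (F : J -> U) :
  \sum_(z <- [seq phi x | x <- s]) F z = \sum_(x <- s) F (phi x).
Proof. by rewrite big_map. Qed.

Lemma mult u v : tsum f (Gm (smash_mul D (smash_act D Sp la ra) u v)) =
  tsum f (lr_mul D la ra (Gm u) (Gm v)).
Proof.
rewrite tG tlr /smash_mul sum_flat /Gm sum_flat.
apply: eq_bigr => x _; rewrite sum_flat sum_map.
transitivity (\sum_(y <- v) N f x.1 y.1 x.2 y.2).
  by apply: eq_big_seq => y _; rewrite sum_map; apply: LHS_N.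
symmetry; rewrite exchange_big sum_flat; apply: eq_big_seq => y _.
rewrite sum_map exchange_big /=; exact: RHS_N.
Qed.
End Main2.

Lemma G_resp s t : teq s t -> teq (Gm s) (Gm t).
Proof. move=> hst U f hf; rewrite !tG; exact: (hst _ _ (bilG hf)). Qed.
Lemma F_resp s t : teq s t -> teq (Fm s) (Fm t).
Proof. move=> hst U f hf; rewrite !tF; exact: (hst _ _ (bilF hf)). Qed.

Lemma F_scale a s : teq (Fm (tscale a s)) (tscale a (Fm s)).
Proof.
move=> U f hf; transitivity (tsum (fun x y => f (a *: x) y) (Fm s)); last by rewrite /tsum big_map.
rewrite !tF /tscale big_map; apply: eq_bigr => x _; apply: eq_bigr => p _ /=; by rewrite raZ1.
Qed.

Lemma Sp1 : Sp 1 = 1.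
Proof.
have hb : bilinear_map (fun x y : H => Sp x * y).
  apply: bil_of => [y|x] a u w; rewrite ?SD ?SZ ?mulrDl ?mulrDr ?sAl' ?sAr' //.
have := hopf_antipode_l hH 1; rewrite (Done hb) (hopf_eps_one hH) scale1r mulr1 //.
Qed.

Lemma F_one : teq (Fm [:: (1, 1)]) [:: (1, 1)].
Proof.
move=> U f hf; rewrite tF /tsum !big_seq1 /=.
have hb : bilinear_map (fun x y => f (ra 1 (Sp x)) y).
  by apply: bil_of => [y|x] a u w; rewrite ?SD ?SZ ?raD2 ?raZ2 ?(fD1 hf) ?(fZ1 hf) ?(fD2 hf) ?(fZ2 hf).
by rewrite (Done hb) Sp1 (bma_ra_one hB).
Qed.

Lemma F_mul s t : teq (Fm (lr_mul D la ra s t)) (smash_mul D (smash_act D Sp la ra) (Fm s) (Fm t)).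
Proof.
set X := smash_mul D _ (Fm s) (Fm t).
have e1 : teq (lr_mul D la ra s t) (Gm X).
  move=> U f hf; rewrite /X (mult hf).
  rewrite (@lr_resp1 _ _ hf s (Gm (Fm s)) t); last by move=> U' f' hf'; rewrite (GF hf').
  rewrite (@lr_resp2 _ _ hf (Gm (Fm s)) t (Gm (Fm t))) //; by move=> U' f' hf'; rewrite (GF hf').
move=> U f hf; rewrite (F_resp e1 hf); exact: FG.
Qed.
End Hopf.

Theorem proposition3p1 (K : fieldType) (H A : algType K)
  (D : H -> seq (H * H)) (eps : H -> K) (S : H -> H)
  (la : H -> A -> A) (ra : A -> H -> A) :
  hopf_algebra D eps S -> cocommutative D -> bimodule_algebra D eps la ra ->
  tensor_alg_iso (lr_mul D la ra) (smash_mul D (smash_act D S la ra)).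
Proof.
move=> hH hC hB.
exists (Fm D S ra); split; [|split; [|split; [|split; [|split; [|split]]]]].
- move=> s t; exact: (F_resp hH hB).
- by move=> s t U f hf; rewrite /Fm map_cat flatten_cat.
- move=> a s; exact: (F_scale S hB).
- move=> s t; exact: (F_mul hH hC hB).
- exact: (F_one hH hB).
- move=> s t hst U f hf; rewrite -(GF hH hB hf s) -(GF hH hB hf t).
  exact: (G_resp hH hB hst).
- move=> t; exists (Gm D ra t) => U f hf; exact: (FG hH hB).
Qed.
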